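(* Let $n\ge2$, let $f_n$ be a primitive polynomial of degree $n$ over $\mathbb F_2$ with root $\alpha$, and identify $\mathbb F_2[x]/\langle f_n\rangle$ with $\mathbb F_{2^n}$. Let $q=2^{n-1}$ and $k=2^n-1=2q-1$. For $j=0,\dots,2^n-2$ let $H_{j,n}=\{\beta\in\mathbb F_{2^n}:\operatorname{Tr}(\alpha^j\beta)=0\}$ and $H_{j,n}^c=\mathbb F_{2^n}\setminus H_{j,n}$. Let $W_n$ be the $2q\times 2k$ $(0,1)$-matrix whose rows are indexed by the elements $x\in\mathbb F_{2^n}$ and whose columns are indexed by $H_{0,n},\dots,H_{k-1,n},H_{0,n}^c,\dots,H_{k-1,n}^c$ (the subgroups first, and the complement of $H_{j,n}$ in the column $k$ places after that of $H_{j,n}$), with entry $(W_n)_{x,A}=1$ if $x\in A$ and $0$ otherwise. Then $W_n$ has full rank $2q=2^n$ (as a matrix over $\mathbb Q$).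
   Context: $\operatorname{Tr}:\mathbb F_{2^n}\to\mathbb F_2$ is the trace map $\operatorname{Tr}(\beta)=\beta+\beta^2+\dots+\beta^{2^{n-1}}$; each $H_{j,n}$ is an additive subgroup of $\mathbb F_{2^n}$ of order $2^{n-1}$. *)

(* Defs.v *)
From HB Require Import structures.
From mathcomp Require Import all_boot all_order all_algebra all_field.
Set Implicit Arguments. Unset Strict Implicit. Unset Printing Implicit Defensive.
Import GRing.Theory.
Local Open Scope ring_scope.

Definition primitive_poly2 (n : nat) (f : {poly 'F_2}) : Prop :=
  [/\ size f = n.+1, irreducible_poly f,
      f %| 'X^(2 ^ n - 1) - 1
    & forall m : nat, (0 < m)%N -> f %| 'X^m - 1 -> (2 ^ n - 1 <= m)%N].

Definition poly_in (L : fieldType) (f : {poly 'F_2}) : {poly L} :=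
  map_poly (fun c : 'F_2 => (val c)%:R) f.

(* Tr : F_{2^n} -> F_2 (viewed inside F_{2^n}) *)
Definition trace2 (L : fieldType) (n : nat) (b : L) : L :=
  \sum_(i < n) b ^+ (2 ^ i).

Definition Hset (L : finFieldType) (n : nat) (alpha : L) (j : nat) : {set L} :=
  [set b : L | trace2 n (alpha ^+ j * b) == 0].

Definition Wmat (L : finFieldType) (n : nat) (alpha : L) :
  'M[rat]_(#|L|, (2 ^ n - 1) + (2 ^ n - 1)) :=
  \matrix_(i, c)
    let x := enum_val i in
    match split c with
    | inl j => (x \in Hset n alpha j)%:R
    | inr j => (x \notin Hset n alpha j)%:R
    end.

(* Main.v *)
Require Import Defs.
From HB Require Import structures.
From mathcomp Require Import all_boot all_order all_algebra all_field.
Local Open Scope ring_scope.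

Module Helpers.
Set Implicit Arguments. Unset Strict Implicit. Unset Printing Implicit Defensive.
Import GRing.Theory Num.Theory.
Section Phi.
Variable (L : fieldType).
Hypothesis chL : (2 \in [pchar L])%N.

Definition phi2 (c : 'F_2) : L := (val c)%:R.

Lemma two0 : (2%:R : L) = 0.
Proof. exact: pcharf0 chL. Qed.

Lemma phi2_nmod : nmod_morphism phi2.
Proof.
split=> [//|x y]; rewrite /phi2.
case: x => [[|[|//]] ?]; case: y => [[|[|//]] ?] //=; rewrite ?addr0 ?add0r //.
by rewrite -natrD two0.
Qed.

Lemma phi2_monoid : monoid_morphism phi2.
Proof.
split=> [//|x y]; rewrite /phi2.
case: x => [[|[|//]] ?]; case: y => [[|[|//]] ?] //=; rewrite ?mulr0 ?mul0r ?mulr1 //.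
Qed.

HB.instance Definition _ := GRing.isNmodMorphism.Build 'F_2 L phi2 phi2_nmod.
HB.instance Definition _ := GRing.isMonoidMorphism.Build 'F_2 L phi2 phi2_monoid.

Lemma poly_inE p : poly_in L p = map_poly phi2 p.
Proof. by []. Qed.

Lemma poly_in_dvd f g a : f %| g -> root (poly_in L f) a -> root (poly_in L g) a.
Proof.
move=> /dvdpP [q ->]; rewrite !poly_inE rmorphM /= /root hornerM => /eqP ->.
by rewrite mulr0.
Qed.

Lemma poly_in_coprime f g a : coprimep f g -> root (poly_in L f) a -> ~~ root (poly_in L g) a.
Proof.
move=> /Bezout_eq1_coprimepP [[u v] /= E] rf; apply/negP => rg.
have := congr1 (fun p => (map_poly phi2 p).[a]) E => /=.
rewrite rmorphD !rmorphM /= rmorph1 hornerD !hornerM hornerC.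
move: rf rg; rewrite /root !poly_inE => /eqP -> /eqP ->.
by rewrite !mulr0 addr0 => /esym/eqP; rewrite oner_eq0.
Qed.

Lemma poly_inXn1 m : poly_in L ('X^m - 1) = 'X^m - 1.
Proof. by rewrite poly_inE rmorphB /= rmorph1 map_polyXn. Qed.

End Phi.

Section Main.
Variables (n : nat) (L : finFieldType) (f : {poly 'F_2}) (alpha : L).
Hypotheses (n2 : (2 <= n)%N) (cardL : #|L| = (2 ^ n)%N)
  (pf : primitive_poly2 n f) (ra : root (poly_in L f) alpha).

Lemma chL : (2 \in [pchar L])%N.
Proof. exact: (card_finPcharP cardL). Qed.

Lemma hornXn1 m : ('X^m - 1 : {poly L}).[alpha] = alpha ^+ m - 1.
Proof. by rewrite hornerD hornerN hornerXn hornerC. Qed.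

Lemma alpha_k : alpha ^+ (2 ^ n - 1) = 1.
Proof.
case: pf => _ _ d _.
have := poly_in_dvd chL d ra; rewrite (poly_inXn1 chL) /root hornXn1 subr_eq0.
by move/eqP.
Qed.

Lemma alpha_min m : (0 < m)%N -> alpha ^+ m = 1 -> (2 ^ n - 1 <= m)%N.
Proof.
move=> m0 am; case: pf => _ irr _ /(_ m m0); apply.
have [//|nd] := boolP (f %| 'X^m - 1).
have cop : coprimep f ('X^m - 1).
  rewrite /coprimep; have := irredp_XsubCP irr (dvdp_gcdl f ('X^m - 1)).
  case=> [|/eqp_dvdl H]; first by rewrite size_poly_eq1.
  by exfalso; move/negP: nd; apply; rewrite -H dvdp_gcdr.
have := poly_in_coprime chL cop ra.
by rewrite (poly_inXn1 chL) /root hornXn1 am subrr eqxx.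
Qed.
End Main.

Section Main.
Variables (n : nat) (L : finFieldType) (f : {poly 'F_2}) (alpha : L).
Hypotheses (n2 : (2 <= n)%N) (cardL : #|L| = (2 ^ n)%N)
  (pf : primitive_poly2 n f) (ra : root (poly_in L f) alpha).

Lemma k_gt0 : (0 < 2 ^ n - 1)%N.
Proof. by rewrite subn_gt0 -{1}(expn0 2) ltn_exp2l // ltnW. Qed.

Lemma alpha_nz : alpha != 0.
Proof.
apply/eqP=> a0; have := alpha_k cardL pf ra; rewrite a0 expr0n.
by rewrite eqn0Ngt k_gt0 /= => /eqP; rewrite eq_sym oner_eq0.
Qed.

Lemma alpha_inj : injective (fun j : 'I_(2 ^ n - 1) => alpha ^+ j).
Proof.
have key (i j : 'I_(2 ^ n - 1)) : (i < j)%N -> alpha ^+ i = alpha ^+ j -> False.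
  move=> ij E.
  have am : alpha ^+ (j - i) = 1.
    have anz : alpha ^+ i != 0 by rewrite expf_neq0 // alpha_nz.
    apply: (mulfI anz); rewrite mulr1 -exprD subnKC; first by rewrite E.
    exact: ltnW.
  have H := alpha_min cardL pf ra (m := (j - i)%N).
  have jgt : (0 < j - i)%N by rewrite subn_gt0.
  have H3 := H jgt am.
  have := leq_trans H3 (leq_subr i j).
  by rewrite leqNgt ltn_ord.
move=> i j E; apply/val_inj => /=.
case: (ltngtP i j) => // ij; first by case: (key _ _ ij E).
by case: (key _ _ ij (esym E)).
Qed.
Lemma alpha_surj c : c != 0 -> exists j : 'I_(2 ^ n - 1), alpha ^+ j = c.
Proof.
move=> cnz.
have S : [set alpha ^+ j | j : 'I_(2 ^ n - 1)] = [set~ 0].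
  apply/eqP; rewrite eqEcard; apply/andP; split.
    apply/subsetP=> x /imsetP [j _ ->]; rewrite !inE expf_neq0 //; exact: alpha_nz.
  rewrite cardsC1 card_imset; last exact: alpha_inj.
  by rewrite ?cardsT card_ord cardL subn1.
have : c \in [set~ 0] by rewrite !inE.
by rewrite -S => /imsetP [j _ ->]; exists j.
Qed.
End Main.

Section Tr.
Variables (n : nat) (L : finFieldType).
Hypotheses (n2 : (2 <= n)%N) (cardL : #|L| = (2 ^ n)%N).

Lemma two0L : (2%:R : L) = 0.
Proof. exact: pcharf0 (chL cardL). Qed.

Lemma sqD (a b : L) : (a + b) ^+ 2 = a ^+ 2 + b ^+ 2.
Proof. by rewrite sqrrD -mulr_natr two0L mulr0 addr0. Qed.

Lemma frobX i (a b : L) : (a + b) ^+ (2 ^ i) = a ^+ (2 ^ i) + b ^+ (2 ^ i).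
Proof.
elim: i => [|i IH]; first by rewrite !expn0 !expr1.
by rewrite expnSr !exprM IH sqD.
Qed.

Lemma tr_add (a b : L) : trace2 n (a + b) = trace2 n a + trace2 n b.
Proof. by rewrite /trace2 -big_split; apply: eq_bigr => i _; exact: frobX. Qed.

Lemma tr0 : trace2 n (0 : L) = 0.
Proof. by rewrite /trace2 big1 // => i _; rewrite expr0n expn_eq0. Qed.

Lemma tr_sq (b : L) : trace2 n b ^+ 2 = trace2 n b.
Proof.
rewrite /trace2 (big_morph (fun x : L => x ^+ 2) sqD (expr0n _ _)).
pose g i := b ^+ (2 ^ i).
have E : \sum_(i < n) (b ^+ (2 ^ i)) ^+ 2 = \sum_(i < n) g i.+1.
  by apply: eq_bigr => i _; rewrite /g -exprM expnSr.
rewrite E.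
have h2 : g 0%N + \sum_(i < n) g i.+1 = \sum_(i < n) g i + g n.
  transitivity (\sum_(i < n.+1) g i).
    by rewrite big_ord_recl.
  by rewrite big_ord_recr.
have gn : g n = g 0%N by rewrite /g -cardL expf_card expn0 expr1.
rewrite gn addrC in h2.
by apply: (addIr (g 0%N)); rewrite h2.
Qed.

Lemma tr01 (b : L) : trace2 n b = 0 \/ trace2 n b = 1.
Proof.
have := tr_sq b; set t := trace2 n b => E.
have : t * (t - 1) == 0 by rewrite mulrBr mulr1 -expr2 E subrr.
by rewrite mulf_eq0 subr_eq0 => /orP [] /eqP; [left|right].
Qed.

Lemma tr_nz : exists e : L, trace2 n e != 0.
Proof.
have [e He|none] := pickP (fun e : L => trace2 n e != 0); first by exists e.
exfalso.
case: n n2 cardL none => [//|m] _ cL none.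
pose P : {poly L} := \sum_(i < m.+1) 'X^(2 ^ i).
have PE e : P.[e] = trace2 m.+1 e.
  by rewrite /P horner_sum; apply: eq_bigr => i _; rewrite hornerXn.
have Pnz : P != 0.
  apply/eqP => /(congr1 (fun p : {poly L} => p`_(2 ^ m))).
  rewrite coef0 /P coef_sum (bigD1 ord_max) //= coefXn eqxx big1 ?addr0.
    by move/eqP; rewrite oner_eq0.
  move=> i /negPf ni; rewrite coefXn eqn_exp2l //.
  by rewrite eq_sym -(inj_eq val_inj) /= in ni; rewrite ni.
have szP : (size P <= (2 ^ m).+1)%N.
  apply: leq_trans (size_sum _ _ _) _.
  apply/bigmax_leqP => i _; rewrite size_polyXn ltnS leq_pexp2l //.
  by rewrite -ltnS.
have := max_poly_roots Pnz (rs := enum L).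
rewrite enum_uniq.
have -> : all (root P) (enum L).
  apply/allP => x _; rewrite /root PE; have := none x; rewrite /= => /negbFE //.
move=> /(_ isT isT); rewrite -cardE cL => H.
have := leq_trans H szP; rewrite expnS ltnS mul2n -addnn.
rewrite -{3}(addn0 (2 ^ m)%N) leq_add2l leqn0 expn_eq0 //.
Qed.
End Tr.

Section Chi.
Variables (n : nat) (L : finFieldType).
Hypotheses (n2 : (2 <= n)%N) (cardL : #|L| = (2 ^ n)%N).

Definition chi (b : L) : rat := if trace2 n b == 0 then 1 else -1.

Lemma chiD (a b : L) : chi (a + b) = chi a * chi b.
Proof.
rewrite /chi (tr_add cardL).
case: (tr01 cardL a) => ->; case: (tr01 cardL b) => ->;
  rewrite ?addr0 ?add0r ?eqxx ?oner_eq0 ?mulr1 ?mul1r //.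
by rewrite -[1 + 1 : L]/(2%:R : L) (two0L cardL) eqxx mulrNN mulr1.
Qed.

Lemma chi0 : chi 0 = 1.
Proof. by rewrite /chi tr0 eqxx. Qed.

Lemma sum_chi (d : L) : \sum_(x : L) chi (x * d) = if d == 0 then #|L|%:R else 0.
Proof.
have [->|dnz] := eqVneq d 0.
  under eq_bigr => x _ do rewrite mulr0 chi0.
  by rewrite sumr_const.
have [e He] := tr_nz n2 cardL.
have te : trace2 n e = 1 by case: (tr01 cardL e) He => ->; rewrite ?eqxx.
set S := \sum_(x : L) _.
have SN : S = - S.
  rewrite {1}/S (reindex_inj (addIr (e / d))) /=.
  under eq_bigr => x _ do rewrite mulrDl divfK // chiD.
  by rewrite -big_distrl /= /chi te oner_eq0 mulrN1.
apply/eqP; move/eqP: SN; rewrite -subr_eq0 opprK -mulr2n mulrn_eq0 //.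
Qed.

Definition Mt : 'M[rat]_#|L| := \matrix_(c, x) chi (enum_val c * enum_val x).

Lemma sum_enum (F : L -> rat) : \sum_(i < #|L|) F (enum_val i) = \sum_(x : L) F x.
Proof. by rewrite (big_enum_val F). Qed.

Lemma MMt : Mt *m Mt^T = (#|L|%:R : rat)%:M.
Proof.
apply/matrixP => c c'; rewrite !mxE.
under eq_bigr => x _ do rewrite !mxE -chiD -mulrDl.
rewrite (sum_enum (fun x => chi ((enum_val c + enum_val c') * x))).
under eq_bigr => x _ do rewrite mulrC.
rewrite sum_chi addr_eq0 (oppr_pchar2 (chL cardL)) (inj_eq enum_val_inj).
by case: (c == c').
Qed.

Lemma rank_Mt : \rank Mt = #|L|.
Proof.
apply: mxrank_unit.
have := @mulmx1_unit _ _ Mt ((#|L|%:R : rat)^-1 *: Mt^T).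
rewrite -scalemxAr MMt scale_scalar_mx mulVf ?pnatr_eq0 -?lt0n ?cardL ?expn_gt0 //.
by case/(_ erefl).
Qed.
End Chi.

End Helpers.
Import Helpers.
Import GRing.Theory Num.Theory.

Theorem mainTheorem4 (n : nat) (L : finFieldType) (f : {poly 'F_2}) (alpha : L) :
  (2 <= n)%N -> #|L| = (2 ^ n)%N ->
  primitive_poly2 n f -> root (poly_in L f) alpha ->
  \rank (Wmat n alpha) = (2 ^ n)%N.
Proof.
move=> n2 cardL pf ra.
set k := (2 ^ n - 1)%N.
have sl (j : 'I_k) : split (lshift k j) = inl j := unsplitK (inl _).
have sr (j : 'I_k) : split (rshift k j) = inr j := unsplitK (inr _).
have sub : (Mt n L <= (Wmat n alpha)^T)%MS.
  apply/row_subP => c.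
  have [c0|cnz] := eqVneq (enum_val c) 0.
    pose j0 : 'I_k := Ordinal (k_gt0 n2).
    have -> : row c (Mt n L) = row (lshift k j0) (Wmat n alpha)^T
                                + row (rshift k j0) (Wmat n alpha)^T.
      apply/rowP => x; rewrite !mxE sl sr c0 mul0r chi0 //.
      by rewrite /=; case: (enum_val x \in Hset n alpha j0).
    by rewrite addmx_sub // row_sub.
  have [j Ej] := alpha_surj n2 cardL pf ra cnz.
  have -> : row c (Mt n L) = row (lshift k j) (Wmat n alpha)^T
                              - row (rshift k j) (Wmat n alpha)^T.
    apply/rowP => x; rewrite !mxE sl sr /= -Ej /chi inE.
    by case: (_ == 0); rewrite /= ?subr0 ?sub0r.
  by rewrite addmx_sub // ?row_sub // -scaleN1r scalemx_sub // row_sub.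
have := mxrankS sub; rewrite (rank_Mt n2 cardL) mxrank_tr => H.
apply/eqP; rewrite -cardL eqn_leq H andbT.
exact: rank_leq_row.
Qed.
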